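(* For $b\in(0,\pi/2)$ let $I_1(b)=\int_{-b}^{b}\frac{\cos^5\varphi}{\sqrt{\cos^4\varphi-\cos^4b}}\,d\varphi$ and $I_2(b)=\int_{-b}^{b}\frac{\cos^3\varphi}{\sqrt{\cos^4\varphi-\cos^4b}}\,d\varphi$. Then the function $b\mapsto\frac{I_1(b)}{I_2(b)^3}$ is decreasing on $(0,\pi/2)$. *)

(* Defs.v *)
From Stdlib Require Import Reals Lra.
Open Scope R_scope.

Definition improper_integral (f : R -> R) (a b l : R) : Prop :=
  (forall c d, a < c -> c <= d -> d < b -> inhabited (Riemann_integrable f c d)) /\
  (forall eps, eps > 0 -> exists delta, delta > 0 /\
     forall c d (pr : Riemann_integrable f c d),
       a < c -> c < a + delta -> b - delta < d -> d < b -> c <= d ->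
       Rabs (RiemannInt pr - l) < eps).

Definition f1 (b : R) (phi : R) : R :=
  cos phi ^ 5 / sqrt (cos phi ^ 4 - cos b ^ 4).

Definition f2 (b : R) (phi : R) : R :=
  cos phi ^ 3 / sqrt (cos phi ^ 4 - cos b ^ 4).

(* Main.v *)
Require Import Defs.
From Stdlib Require Import Reals Lra.
From Coquelicot Require Import Coquelicot.
Open Scope R_scope.

Definition theta (k phi : R) := asin (sin phi / k).
Definition dtheta (k phi : R) := cos phi / sqrt (k ^ 2 - sin phi ^ 2).

Lemma theta_deriv k phi : 0 < k -> Rabs (sin phi) < k ->
  is_derive (theta k) phi (dtheta k phi).
Proof.
  intros hk hs.
  assert (hx : -1 < sin phi / k < 1).
  { apply Rabs_def2 in hs. split.
    - apply (Rmult_lt_reg_r k); auto. unfold Rdiv; rewrite Rmult_assoc, Rinv_l; lra.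
    - apply (Rmult_lt_reg_r k); auto. unfold Rdiv; rewrite Rmult_assoc, Rinv_l; lra. }
  unfold theta.
  apply (is_derive_ext (fun p => asin (sin p / k))); [reflexivity|].
  assert (H1 : is_derive asin (sin phi / k) (1 / sqrt (1 - (sin phi / k)²))).
  { apply is_derive_Reals. rewrite <- (derive_pt_asin _ hx).
    eapply derive_pt_eq_1. reflexivity. }
  assert (H2 : is_derive (fun p => sin p / k) phi (cos phi / k)).
  { auto_derive; [auto|]. field. lra. }
  pose proof (is_derive_comp asin (fun p => sin p / k) phi _ _ H1 H2) as H3.
  eapply is_derive_ext; [intros; reflexivity|].
  replace (dtheta k phi) with (cos phi / k * (1 / sqrt (1 - (sin phi / k)²))).
  exact H3.
  unfold dtheta.
  assert (e : k ^ 2 - sin phi ^ 2 = k² * (1 - (sin phi / k)²)).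
  { unfold Rsqr. field. lra. }
  rewrite e, sqrt_mult, sqrt_Rsqr; try lra.
  - field. split; [|lra]. apply Rgt_not_eq, sqrt_lt_R0.
    unfold Rsqr. nra.
  - apply Rle_0_sqr.
  - unfold Rsqr. nra.
Qed.
Lemma theta_near_top b eps : 0 < b < PI/2 -> eps > 0 ->
  exists delta, delta > 0 /\ forall phi, b - delta < phi < b ->
    PI/2 - eps < theta (sin b) phi.
Proof.
  intros hb he.
  set (e := Rmin eps (PI/2)).
  assert (PI/2 > 0) by (pose proof PI_RGT_0; lra).
  assert (he1 : 0 < e) by (unfold e; apply Rmin_glb_lt; lra).
  assert (he2 : e <= eps) by apply Rmin_l.
  assert (he3 : e <= PI/2) by apply Rmin_r.
  set (y0 := sin (PI/2 - e)).
  assert (hy0 : 0 <= y0 < 1).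
  { split. unfold y0. apply sin_ge_0; lra.
    rewrite <- sin_PI2. unfold y0. apply sin_increasing_1; lra. }
  assert (hsb : 0 < sin b). { apply sin_gt_0; lra. }
  assert (hgap : sin b * y0 < sin b) by nra.
  destruct (continuity_sin b (sin b - sin b * y0)) as [alp [halp Hc]]; [lra|].
  exists (Rmin alp b). split. { apply Rmin_glb_lt; lra. }
  intros phi [h1 h2].
  assert (hphi1 : phi > b - alp) by (pose proof (Rmin_l alp b); lra).
  assert (hphi2 : phi > 0) by (pose proof (Rmin_r alp b); lra).
  assert (hs1 : sin phi > sin b * y0).
  { assert (hd : Rabs (sin phi - sin b) < sin b - sin b * y0).
    { apply (Hc phi). split. split. exact I. lra. simpl. unfold R_dist.
      rewrite Rabs_left; lra. }
    apply Rabs_def2 in hd. lra. }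
  assert (hs2 : sin phi < sin b) by (apply sin_increasing_1; lra).
  set (x := sin phi / sin b).
  assert (hx : y0 < x < 1).
  { unfold x. split.
    - apply (Rmult_lt_reg_r (sin b)); auto. unfold Rdiv. rewrite Rmult_assoc, Rinv_l; lra.
    - apply (Rmult_lt_reg_r (sin b)); auto. unfold Rdiv. rewrite Rmult_assoc, Rinv_l; lra. }
  unfold theta. fold x.
  destruct (Rlt_le_dec (PI/2 - e) (asin x)) as [hlt|hle]; [lra|].
  exfalso. pose proof (asin_bound x).
  destruct (Rle_lt_or_eq_dec _ _ hle) as [hl|heq].
  - assert (hq : sin (asin x) < sin (PI/2 - e)) by (apply sin_increasing_1; lra).
    rewrite sin_asin in hq by lra. fold y0 in hq. lra.
  - assert (hq : sin (asin x) = y0) by (rewrite heq; reflexivity).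
    rewrite sin_asin in hq by lra. lra.
Qed.

Lemma theta_odd k phi : theta k (- phi) = - theta k phi.
Proof. unfold theta. rewrite sin_neg, <- asin_opp. f_equal. unfold Rdiv. ring. Qed.

Lemma sin_abs_lt b x : 0 < b < PI/2 -> -b < x < b -> Rabs (sin x) < sin b.
Proof.
  intros hb hx. pose proof PI_RGT_0.
  apply Rabs_def1.
  - apply sin_increasing_1; lra.
  - assert (hq : sin (- x) < sin b) by (apply sin_increasing_1; lra).
    rewrite sin_neg in hq. lra.
Qed.

Lemma dtheta_cont k x : 0 < k -> Rabs (sin x) < k -> continuous (dtheta k) x.
Proof.
  intros hk hs. apply (ex_derive_continuous (V:=R_NormedModule) (dtheta k)). unfold dtheta.
  assert (0 < k ^ 2 - sin x ^ 2).
  { apply Rabs_def2 in hs. nra. }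
  auto_derive. split; [lra|split; auto]. apply Rgt_not_eq, sqrt_lt_R0. lra.
Qed.

Lemma is_RInt_sub b (g f : R -> R) c d : 0 < b < PI/2 ->
  (forall x, -(PI/2) <= x <= PI/2 -> continuous g x) ->
  (forall phi, -b < phi < b -> f phi = dtheta (sin b) phi * g (theta (sin b) phi)) ->
  -b < c < b -> -b < d < b ->
  is_RInt f c d (RInt g (theta (sin b) c) (theta (sin b) d)).
Proof.
  intros hb hg hf hc hd.
  assert (hsb : 0 < sin b) by (apply sin_gt_0; pose proof PI_RGT_0; lra).
  assert (hin : forall x, Rmin c d <= x <= Rmax c d -> -b < x < b).
  { intros x [h1 h2]. split.
    - eapply Rlt_le_trans; [|exact h1]. apply Rmin_glb_lt; lra.
    - eapply Rle_lt_trans; [exact h2|]. apply Rmax_lub_lt; lra. }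
  eapply is_RInt_ext.
  2: { apply (is_RInt_comp g (theta (sin b)) (dtheta (sin b))).
       - intros x _. apply hg. apply asin_bound.
       - intros x hx. specialize (hin x hx). split.
         + apply theta_deriv; auto. apply sin_abs_lt; auto.
         + apply dtheta_cont; auto. apply sin_abs_lt; auto. }
  intros x [h1 h2]. rewrite hf. reflexivity. apply hin. lra.
Qed.

Lemma improper_sub b (g f : R -> R) M : 0 < b < PI/2 ->
  (forall x, -(PI/2) <= x <= PI/2 -> continuous g x) ->
  (forall x, -(PI/2) <= x <= PI/2 -> Rabs (g x) <= M) ->
  (forall phi, -b < phi < b -> f phi = dtheta (sin b) phi * g (theta (sin b) phi)) ->
  improper_integral f (-b) b (RInt g (-(PI/2)) (PI/2)).
Proof.
  intros hb hg hM hf.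
  pose proof PI_RGT_0 as hpi.
  assert (hex : forall x y, -(PI/2) <= x <= PI/2 -> -(PI/2) <= y <= PI/2 -> ex_RInt g x y).
  { intros x y hx hy. apply (ex_RInt_continuous (V:=R_CompleteNormedModule)). intros z [h1 h2]. apply hg. split.
    - eapply Rle_trans; [|exact h1]. apply Rmin_glb; lra.
    - eapply Rle_trans; [exact h2|]. apply Rmax_lub; lra. }
  split.
  - intros c d hc hcd hd. constructor. apply ex_RInt_Reals_0.
    eexists. apply (is_RInt_sub b g f c d); auto; lra.
  - intros eps heps.
    set (M' := Rabs M + 1).
    assert (hM' : 0 < M') by (unfold M'; pose proof (Rabs_pos M); lra).
    assert (hgM : forall x, -(PI/2) <= x <= PI/2 -> Rabs (g x) <= M').
    { intros x hx. pose proof (hM x hx). pose proof (Rle_abs M). unfold M'. lra. }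
    destruct (theta_near_top b (eps / (2 * M')) hb) as [delta [hdel H]].
    { apply Rdiv_lt_0_compat; lra. }
    exists delta. split; auto.
    intros c d pr hc1 hc2 hd1 hd2 hcd.
    rewrite <- (RInt_Reals f c d pr).
    rewrite (is_RInt_unique f c d _ (is_RInt_sub b g f c d hb hg hf ltac:(lra) ltac:(lra))).
    set (tc := theta (sin b) c). set (td := theta (sin b) d).
    assert (htc : - (PI/2) < tc < -(PI/2) + eps / (2 * M')).
    { split.
      - unfold tc, theta. apply asin_bound_lt.
        pose proof (sin_abs_lt b c hb ltac:(lra)) as hs.
        assert (hsb : 0 < sin b) by (apply sin_gt_0; lra).
        apply Rabs_def2 in hs. split;
        (apply (Rmult_lt_reg_r (sin b)); auto; unfold Rdiv; rewrite Rmult_assoc, Rinv_l; lra).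
      - unfold tc. replace c with (- - c) by ring. rewrite theta_odd.
        pose proof (H (- c) ltac:(lra)). lra. }
    assert (htd : PI/2 - eps / (2 * M') < td <= PI/2).
    { split. apply H. lra. apply asin_bound. }
    assert (htc' : -(PI/2) <= tc <= PI/2) by (apply asin_bound).
    assert (htd' : -(PI/2) <= td <= PI/2) by (apply asin_bound).
    assert (eq : RInt g (-(PI/2)) (PI/2) =
                 RInt g (-(PI/2)) tc + RInt g tc td + RInt g td (PI/2)).
    { rewrite <- (RInt_Chasles g (-(PI/2)) tc (PI/2)) by (apply hex; lra).
      rewrite <- (RInt_Chasles g tc td (PI/2)) by (apply hex; lra).
      unfold plus; simpl. ring. }
    rewrite eq.
    assert (b1 : Rabs (RInt g (-(PI/2)) tc) <= (tc - -(PI/2)) * M').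
    { apply abs_RInt_le_const; [lra| apply hex; lra|]. intros t ht. apply hgM. lra. }
    assert (b2 : Rabs (RInt g td (PI/2)) <= (PI/2 - td) * M').
    { apply abs_RInt_le_const; [lra| apply hex; lra|]. intros t ht. apply hgM. lra. }
    replace (RInt g tc td - (RInt g (- (PI / 2)) tc + RInt g tc td + RInt g td (PI / 2)))
      with (- (RInt g (-(PI/2)) tc + RInt g td (PI/2))) by ring.
    rewrite Rabs_Ropp.
    eapply Rle_lt_trans; [apply Rabs_triang|].
    assert (q1 : (tc - -(PI/2)) * M' < eps / (2 * M') * M') by (apply Rmult_lt_compat_r; lra).
    assert (q2 : (PI/2 - td) * M' < eps / (2 * M') * M') by (apply Rmult_lt_compat_r; lra).
    assert (q3 : eps / (2 * M') * M' = eps / 2) by (field; lra).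
    lra.
Qed.

Definition W (m t : R) := 1 - m * sin t ^ 2.

Lemma sin2_bounds t : 0 <= sin t ^ 2 <= 1.
Proof. pose proof (sin2_cos2 t). unfold Rsqr in H. split; nra. Qed.

Lemma W_pos m t : m < 1 -> 0 < W m t.
Proof. intros hm. unfold W. pose proof (sin2_bounds t). destruct (Rle_lt_dec 0 m); nra. Qed.

Lemma W_gt m t : 0 < m -> 1 - m <= W m t.
Proof. intros hm. unfold W. pose proof (sin2_bounds t). nra. Qed.

Definition FE (m t : R) := sin t * cos t * sqrt (W m t).

Lemma FE_deriv m t : 0 < m < 1 ->
  is_derive (FE m) t ((3 * (W m t * sqrt (W m t)) + (2*m - 4) * sqrt (W m t)
      + (1 - m) / sqrt (W m t)) / m).
Proof.
  intros hm. pose proof (W_pos m t ltac:(lra)) as hw.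
  unfold FE, W in *.
  auto_derive;
  replace (1 + - (m * (sin t * (sin t * 1)))) with (1 - m * sin t ^ 2) by ring; [lra|].
  set (s := sin t) in *. set (c := cos t).
  assert (hc : c ^ 2 = 1 - s ^ 2). { unfold c, s. pose proof (sin2_cos2 t). unfold Rsqr in H. lra. }
  assert (hr := sqrt_sqrt (1 - m * s^2) ltac:(lra)).
  set (r := sqrt (1 - m * s ^ 2)) in *.
  assert (hr0 : 0 < r) by (apply sqrt_lt_R0; lra).
  field_simplify_eq; [|lra].
  replace (r ^ 2) with (1 - m * s ^ 2) by (rewrite <- hr; ring).
  rewrite hc. ring.
Qed.

Lemma RInt_lin3 (p q r : R -> R) a b x y z :
  ex_RInt p a b -> ex_RInt q a b -> ex_RInt r a b ->
  @eq R (RInt (fun t => x * p t + y * q t + z * r t) a b)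
  (x * RInt p a b + y * RInt q a b + z * RInt r a b).
Proof.
  intros hp hq hr. apply (is_RInt_unique (V:=R_CompleteNormedModule)).
  apply (is_RInt_plus (V:=R_NormedModule) (fun t => x * p t + y * q t) (fun t => z * r t)).
  apply (is_RInt_plus (V:=R_NormedModule) (fun t => x * p t) (fun t => y * q t)).
  apply (is_RInt_scal (V:=R_NormedModule) p a b x); apply (RInt_correct (V:=R_CompleteNormedModule)); auto.
  apply (is_RInt_scal (V:=R_NormedModule) q a b y); apply (RInt_correct (V:=R_CompleteNormedModule)); auto.
  apply (is_RInt_scal (V:=R_NormedModule) r a b z); apply (RInt_correct (V:=R_CompleteNormedModule)); auto.
Qed.

Lemma cont_of_derive (f : R -> R) x : ex_derive f x -> continuity_pt f x.
Proof. intros h. apply continuity_pt_filterlim. apply (ex_derive_continuous (V:=R_NormedModule) f x h). Qed.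

Lemma param_deriv (h dh : R -> R -> R) a b m :
  (forall u t, u < 1 -> is_derive (fun z => h z t) u (dh u t)) ->
  (forall u t, u < 1 -> continuity_2d_pt dh u t) ->
  (forall u t, u < 1 -> continuous (h u) t) ->
  m < 1 ->
  is_derive (fun u => RInt (h u) a b) m (RInt (dh m) a b).
Proof.
  intros hd hc ht hm.
  assert (e : RInt (dh m) a b = RInt (fun t => Derive (fun u => h u t) m) a b).
  { apply RInt_ext. intros t _. symmetry. apply is_derive_unique. apply hd; auto. }
  rewrite e.
  apply (is_derive_RInt_param h a b m).
  - apply (locally_interval _ m m_infty 1); simpl; auto.
    intros y _ hy t _. eexists. apply hd. exact hy.
  - intros t _. apply continuity_2d_pt_ext_loc with (f := dh).
    + exists (mkposreal (1 - m) ltac:(lra)). simpl. intros u v hu _.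
      symmetry. apply is_derive_unique. apply hd. apply Rabs_def2 in hu. lra.
    + apply hc; auto.
  - apply (locally_interval _ m m_infty 1); simpl; auto.
    intros y _ hy. apply (ex_RInt_continuous (V:=R_CompleteNormedModule)).
    intros z _. apply ht; auto.
Qed.

Definition hE (m t : R) := sqrt (W m t).
Definition hK (m t : R) := / sqrt (W m t).
Definition hE3 (m t : R) := W m t * sqrt (W m t).
Definition hL (m t : R) := / (W m t * sqrt (W m t)).
Ltac toR := match goal with |- ?a = ?b => let H := fresh in assert (H : @eq R a b); [|exact H] end.

Definition Ei (m : R) : R := RInt (hE m) (-(PI/2)) (PI/2).
Definition Ki (m : R) : R := RInt (hK m) (-(PI/2)) (PI/2).
Definition E3i (m : R) : R := RInt (hE3 m) (-(PI/2)) (PI/2).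
Definition Li (m : R) : R := RInt (hL m) (-(PI/2)) (PI/2).

Lemma W_side u t : u < 1 -> 0 < 1 + - (u * (sin t * (sin t * 1))).
Proof. intros hu. pose proof (W_pos u t hu). unfold W in *. nra. Qed.

Ltac wnorm := repeat match goal with |- context [1 + - (?u * (sin ?t * (sin ?t * 1)))] =>
  replace (1 + - (u * (sin t * (sin t * 1)))) with (1 - u * sin t ^ 2) by ring end.

Ltac wside := match goal with
  | h : ?u < 1 |- context [1 + - (?u * (sin ?t * (sin ?t * 1)))] =>
      pose proof (W_side u t h) end.

Lemma cont_t h u t : (h = hE \/ h = hK \/ h = hE3 \/ h = hL) -> u < 1 -> continuous (h u) t.
Proof.
  intros hh hu. apply (ex_derive_continuous (V:=R_NormedModule) (h u)).
  destruct hh as [ -> | [ -> | [ -> | -> ] ] ]; unfold hE, hK, hE3, hL, W; auto_derive;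
  wside; repeat split; try lra.
  all: try (apply Rgt_not_eq, sqrt_lt_R0; lra).
  apply Rmult_integral_contrapositive; split; [lra|]. apply Rgt_not_eq, sqrt_lt_R0; lra.
Qed.

Lemma ex_RInt_h h u a b : (h = hE \/ h = hK \/ h = hE3 \/ h = hL) -> u < 1 -> ex_RInt (h u) a b.
Proof. intros hh hu. apply (ex_RInt_continuous (V:=R_CompleteNormedModule)). intros; apply cont_t; auto. Qed.

Lemma c2_sin2 u t : continuity_2d_pt (fun _ v => sin v ^ 2) u t.
Proof.
  apply (continuity_1d_2d_pt_comp (fun v => sin v ^ 2) (fun _ v => v)).
  apply cont_of_derive. auto_derive. auto. apply continuity_2d_pt_id2.
Qed.

Lemma c2_W u t : continuity_2d_pt W u t.
Proof.
  unfold W. apply (continuity_2d_pt_minus (fun _ _ => 1) (fun u v => u * sin v ^ 2)).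
  apply continuity_2d_pt_const.
  apply (continuity_2d_pt_mult (fun u _ => u) (fun _ v => sin v ^ 2)).
  apply continuity_2d_pt_id1. apply c2_sin2.
Qed.

Lemma c2_sW u t : u < 1 -> continuity_2d_pt (fun u v => sqrt (W u v)) u t.
Proof.
  intros hu. apply (continuity_1d_2d_pt_comp sqrt W).
  apply continuity_pt_sqrt. pose proof (W_pos u t hu); lra. apply c2_W.
Qed.

Definition dE (u t : R) := - (sin t ^ 2) * / (2 * sqrt (W u t)).
Definition dK (u t : R) := sin t ^ 2 * / (2 * (W u t * sqrt (W u t))).

Lemma dE_ok u t : u < 1 -> is_derive (fun z => hE z t) u (dE u t).
Proof.
  intros hu. pose proof (W_pos u t hu) as hw. unfold hE, dE, W in *. auto_derive.
  wside; lra. wnorm. field. apply Rgt_not_eq, sqrt_lt_R0. lra.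
Qed.

Lemma dK_ok u t : u < 1 -> is_derive (fun z => hK z t) u (dK u t).
Proof.
  intros hu. pose proof (W_pos u t hu) as hw. unfold hK, dK, W in *. auto_derive.
  wside; split; [lra|]. split; auto. apply Rgt_not_eq, sqrt_lt_R0. lra.
  wnorm. assert (hr := sqrt_sqrt (1 - u * sin t ^ 2) ltac:(lra)).
  assert (0 < sqrt (1 - u * sin t ^ 2)) by (apply sqrt_lt_R0; lra).
  set (r := sqrt (1 - u * sin t ^ 2)) in *.
  rewrite <- hr. field. lra.
Qed.

Lemma c2_dE u t : u < 1 -> continuity_2d_pt dE u t.
Proof.
  intros hu. pose proof (W_pos u t hu). unfold dE.
  apply (continuity_2d_pt_mult (fun _ v => - (sin v ^ 2)) (fun u v => / (2 * sqrt (W u v)))).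
  apply (continuity_2d_pt_opp (fun _ v => sin v ^ 2)). apply c2_sin2.
  apply (continuity_2d_pt_inv (fun u v => 2 * sqrt (W u v))).
  apply (continuity_2d_pt_mult (fun _ _ => 2) (fun u v => sqrt (W u v))).
  apply continuity_2d_pt_const. apply c2_sW; auto.
  apply Rgt_not_eq. apply Rmult_lt_0_compat. lra. apply sqrt_lt_R0; lra.
Qed.

Lemma c2_dK u t : u < 1 -> continuity_2d_pt dK u t.
Proof.
  intros hu. pose proof (W_pos u t hu). unfold dK.
  apply (continuity_2d_pt_mult (fun _ v => sin v ^ 2) (fun u v => / (2 * (W u v * sqrt (W u v))))).
  apply c2_sin2.
  apply (continuity_2d_pt_inv (fun u v => 2 * (W u v * sqrt (W u v)))).
  apply (continuity_2d_pt_mult (fun _ _ => 2) (fun u v => W u v * sqrt (W u v))).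
  apply continuity_2d_pt_const.
  apply (continuity_2d_pt_mult W (fun u v => sqrt (W u v))).
  apply c2_W. apply c2_sW; auto.
  apply Rgt_not_eq. apply Rmult_lt_0_compat. lra. apply Rmult_lt_0_compat. lra. apply sqrt_lt_R0; lra.
Qed.

Lemma Ei_deriv0 m : m < 1 -> is_derive Ei m (RInt (dE m) (-(PI/2)) (PI/2)).
Proof.
  intros hm. apply (param_deriv hE dE); auto.
  apply dE_ok. apply c2_dE. intros; apply cont_t; auto.
Qed.

Lemma Ki_deriv0 m : m < 1 -> is_derive Ki m (RInt (dK m) (-(PI/2)) (PI/2)).
Proof.
  intros hm. apply (param_deriv hK dK); auto.
  apply dK_ok. apply c2_dK. intros; apply cont_t; auto.
Qed.

Lemma RInt_dE m : 0 < m < 1 -> RInt (dE m) (-(PI/2)) (PI/2) = (Ei m - Ki m) / (2 * m).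
Proof.
  intros hm.
  rewrite (RInt_ext _ (fun t => / (2*m) * hE m t + (- / (2*m)) * hK m t + 0 * hK m t)).
  - rewrite RInt_lin3 by (apply ex_RInt_h; auto; lra). unfold Ei, Ki. toR. field. lra.
  - intros t _. pose proof (W_pos m t ltac:(lra)) as hw. unfold dE, hE, hK.
    assert (hr := sqrt_sqrt (W m t) ltac:(lra)).
    assert (0 < sqrt (W m t)) by (apply sqrt_lt_R0; lra).
    replace (sin t ^ 2) with ((1 - W m t) / m) by (unfold W; field; lra).
    set (r := sqrt (W m t)) in *. rewrite <- hr. toR. field. lra.
Qed.

Lemma RInt_dK m : 0 < m < 1 -> RInt (dK m) (-(PI/2)) (PI/2) = (Li m - Ki m) / (2 * m).
Proof.
  intros hm.
  rewrite (RInt_ext _ (fun t => / (2*m) * hL m t + (- / (2*m)) * hK m t + 0 * hK m t)).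
  - rewrite RInt_lin3 by (apply ex_RInt_h; auto; lra). unfold Li, Ki. toR. field. lra.
  - intros t _. pose proof (W_pos m t ltac:(lra)) as hw. unfold dK, hL, hK.
    assert (hr := sqrt_sqrt (W m t) ltac:(lra)).
    assert (0 < sqrt (W m t)) by (apply sqrt_lt_R0; lra).
    replace (sin t ^ 2) with ((1 - W m t) / m) by (unfold W; field; lra).
    set (r := sqrt (W m t)) in *. toR. field. lra.
Qed.

Ltac sidec := repeat split; try lra;
  try (apply Rgt_not_eq, sqrt_lt_R0, W_pos; lra);
  try (apply Rgt_not_eq, W_pos; lra).

Definition FL (m t : R) := sin t * cos t / sqrt (W m t).

Lemma FL_deriv m t : 0 < m < 1 ->
  is_derive (FL m) t ((sqrt (W m t) + (m - 1) / (W m t * sqrt (W m t))) / m).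
Proof.
  intros hm. pose proof (W_pos m t ltac:(lra)) as hw.
  unfold FL, W in *.
  auto_derive; wnorm.
  split; [lra|split; auto]. apply Rgt_not_eq, sqrt_lt_R0; lra.
  set (s := sin t) in *. set (c := cos t).
  assert (hc : c ^ 2 = 1 - s ^ 2). { unfold c, s. pose proof (sin2_cos2 t). unfold Rsqr in H. lra. }
  assert (hr := sqrt_sqrt (1 - m * s^2) ltac:(lra)).
  set (r := sqrt (1 - m * s ^ 2)) in *.
  assert (hr0 : 0 < r) by (apply sqrt_lt_R0; lra).
  rewrite <- hr.
  field_simplify_eq; [|lra].
  replace (r ^ 2) with (1 - m * s ^ 2) by (rewrite <- hr; ring).
  replace (r ^ 4) with ((1 - m * s ^ 2)^2) by (rewrite <- hr; ring).
  rewrite hc. ring.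
Qed.

Lemma cont_lin m t x y z : m < 1 ->
  continuous (fun t => x * hE3 m t + y * hE m t + z * hK m t) t.
Proof.
  intros hm. pose proof (W_pos m t hm).
  apply (ex_derive_continuous (V:=R_NormedModule) (fun t => x * hE3 m t + y * hE m t + z * hK m t)).
  unfold hE3, hE, hK, W in *. auto_derive. wnorm. repeat split; try lra; auto;
  apply Rgt_not_eq, sqrt_lt_R0; lra.
Qed.

Lemma cont_lin2 m t x y z : m < 1 ->
  continuous (fun t => x * hE m t + y * hL m t + z * hK m t) t.
Proof.
  intros hm. pose proof (W_pos m t hm).
  apply (ex_derive_continuous (V:=R_NormedModule) (fun t => x * hE m t + y * hL m t + z * hK m t)).
  unfold hL, hE, hK, W in *. auto_derive. wnorm. repeat split; try lra; auto;
  try (apply Rgt_not_eq, sqrt_lt_R0; lra).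
  apply Rmult_integral_contrapositive; split; [lra|]. apply Rgt_not_eq, sqrt_lt_R0; lra.
Qed.

Lemma E3_id m : 0 < m < 1 -> 3 * E3i m + (2 * m - 4) * Ei m + (1 - m) * Ki m = 0.
Proof.
  intros hm.
  assert (H : is_RInt (fun t => 3 / m * hE3 m t + (2 * m - 4) / m * hE m t + (1 - m) / m * hK m t)
              (-(PI/2)) (PI/2) (minus (FE m (PI/2)) (FE m (-(PI/2))))).
  { apply (is_RInt_derive (V:=R_CompleteNormedModule)).
    - intros t _. eapply is_derive_ext; [intros; reflexivity|].
      replace (3 / m * hE3 m t + (2 * m - 4) / m * hE m t + (1 - m) / m * hK m t)
        with ((3 * (W m t * sqrt (W m t)) + (2*m - 4) * sqrt (W m t)
      + (1 - m) / sqrt (W m t)) / m) by (unfold hE3, hE, hK; toR; field; sidec).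
      apply FE_deriv; auto.
    - intros t _. apply cont_lin; lra. }
  apply (is_RInt_unique (V:=R_CompleteNormedModule)) in H.
  rewrite RInt_lin3 in H by (apply ex_RInt_h; auto 6; lra).
  unfold FE in H. rewrite cos_PI2, cos_neg, cos_PI2 in H.
  unfold minus, plus, opp in H; simpl in H.
  unfold E3i, Ei, Ki.
  apply (Rmult_eq_reg_r (/ m)); [|apply Rinv_neq_0_compat; lra].
  rewrite Rmult_0_l. rewrite <- (Rplus_0_r (_ * / m)). 
  transitivity (3 / m * RInt (hE3 m) (- (PI / 2)) (PI / 2) +
      (2 * m - 4) / m * RInt (hE m) (- (PI / 2)) (PI / 2) +
      (1 - m) / m * RInt (hK m) (- (PI / 2)) (PI / 2)).
  unfold Rdiv. ring. rewrite H. ring.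
Qed.

Lemma L_id m : 0 < m < 1 -> Li m = Ei m / (1 - m).
Proof.
  intros hm.
  assert (H : is_RInt (fun t => 1 / m * hE m t + (m - 1) / m * hL m t + 0 * hK m t)
              (-(PI/2)) (PI/2) (minus (FL m (PI/2)) (FL m (-(PI/2))))).
  { apply (is_RInt_derive (V:=R_CompleteNormedModule)).
    - intros t _. eapply is_derive_ext; [intros; reflexivity|].
      replace (1 / m * hE m t + (m - 1) / m * hL m t + 0 * hK m t)
        with ((sqrt (W m t) + (m - 1) / (W m t * sqrt (W m t))) / m)
        by (unfold hL, hE, hK; toR; field; sidec).
      apply FL_deriv; auto.
    - intros t _. apply cont_lin2; lra. }
  apply (is_RInt_unique (V:=R_CompleteNormedModule)) in H.
  rewrite RInt_lin3 in H by (apply ex_RInt_h; auto 6; lra).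
  assert (z1 : FL m (PI/2) = 0) by (unfold FL; rewrite cos_PI2; unfold Rdiv; ring).
  assert (z2 : FL m (-(PI/2)) = 0) by (unfold FL; rewrite cos_neg, cos_PI2; unfold Rdiv; ring).
  rewrite z1, z2 in H. unfold minus, plus, opp in H; simpl in H.
  unfold Li, Ei.
  set (EE := RInt (hE m) (- (PI / 2)) (PI / 2)) in *.
  set (LL := RInt (hL m) (- (PI / 2)) (PI / 2)) in *.
  set (KK := RInt (hK m) (- (PI / 2)) (PI / 2)) in *.
  assert (H2 : EE + (m - 1) * LL = m * (1 / m * EE + (m - 1) / m * LL + 0 * KK)) by (field; lra).
  rewrite H in H2. 
  assert (G : forall e l : R, e + (m - 1) * l = 0 -> l = e / (1 - m)).
  { intros e l he. replace e with ((1 - m) * l) by nra. field. lra. }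
  apply G. rewrite H2. ring.
Qed.

Lemma hpi2 : 0 < PI / 2.
Proof. pose proof PI_RGT_0. lra. Qed.

Lemma Ki_pos m : m < 1 -> 0 < Ki m.
Proof.
  intros hm. unfold Ki. pose proof hpi2.
  apply RInt_gt_0; [lra| |].
  - intros t _. unfold hK. apply Rinv_0_lt_compat, sqrt_lt_R0, W_pos; auto.
  - intros t _. apply cont_t; auto.
Qed.

Lemma EK_gt m : 0 < m < 1 -> (1 - m) * Ki m < Ei m.
Proof.
  intros hm. pose proof hpi2.
  assert (e : (1 - m) * Ki m = RInt (fun t => (1 - m) * hK m t) (-(PI/2)) (PI/2)).
  { unfold Ki. symmetry.
    apply (RInt_scal (V:=R_CompleteNormedModule) (hK m)). apply ex_RInt_h; auto; lra. }
  rewrite e. unfold Ei. apply RInt_lt; [lra| | |].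
  - intros; apply cont_t; auto; lra.
  - intros t _. apply (ex_derive_continuous (V:=R_NormedModule) (fun t => (1 - m) * hK m t)).
    pose proof (W_pos m t ltac:(lra)). unfold hK, W in *. auto_derive. wnorm. sidec.
  - intros t ht. unfold hK, hE.
    pose proof (W_pos m t ltac:(lra)) as hw.
    assert (hc : 0 < cos t) by (apply cos_gt_0; lra).
    assert (hs : sin t ^ 2 < 1).
    { pose proof (sin2_cos2 t). unfold Rsqr in H0. nra. }
    assert (hr := sqrt_sqrt (W m t) ltac:(lra)).
    assert (0 < sqrt (W m t)) by (apply sqrt_lt_R0; lra).
    set (r := sqrt (W m t)) in *.
    apply (Rmult_lt_reg_r r); auto.
    rewrite Rmult_assoc, Rinv_l by lra. rewrite hr. unfold W. nra.
Qed.

Lemma Ei_deriv m : 0 < m < 1 -> is_derive Ei m ((Ei m - Ki m) / (2 * m)).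
Proof. intros hm. rewrite <- RInt_dE by auto. apply Ei_deriv0. lra. Qed.

Lemma Ki_deriv m : 0 < m < 1 -> is_derive Ki m ((Ei m / (1 - m) - Ki m) / (2 * m)).
Proof. intros hm. rewrite <- L_id by auto. rewrite <- RInt_dK by auto. apply Ki_deriv0. lra. Qed.

Lemma der_lin (p q F G : R -> R) dp dq dF dG m :
  is_derive p m dp -> is_derive q m dq -> is_derive F m dF -> is_derive G m dG ->
  is_derive (fun x => p x * F x + q x * G x) m (dp * F m + p m * dF + (dq * G m + q m * dG)).
Proof.
  intros h1 h2 h3 h4.
  apply (is_derive_plus (K:=R_AbsRing) (V:=R_NormedModule) (fun x => p x * F x) (fun x => q x * G x)).
  apply (is_derive_mult p F m dp dF); auto. intros; apply Rmult_comm.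
  apply (is_derive_mult q G m dq dG); auto. intros; apply Rmult_comm.
Qed.

Definition Nf m := (1 + m) / 3 * Ei m + (- (1 - m) * (1 + 3 * m) / 12) * Ki m.
Definition Df m := 1 * Ei m + (- (1 - m) / 2) * Ki m.
Definition Rf m := Nf m / Df m ^ 3.

Lemma Df_pos m : 0 < m < 1 -> 0 < Df m.
Proof. intros hm. unfold Df. pose proof (EK_gt m hm). pose proof (Ki_pos m ltac:(lra)). nra. Qed.

Lemma sign_alg m E K : 0 < m < 1 -> 0 < K -> (1 - m) * K < E ->
  let E' := (E - K) / (2 * m) in let K' := (E / (1 - m) - K) / (2 * m) in
  let N := (1 + m) / 3 * E + (- (1 - m) * (1 + 3 * m) / 12) * K in
  let D := 1 * E + (- (1 - m) / 2) * K in
  let N' := 1/3 * E + (1 + m) / 3 * E' + ((3 * m - 1) / 6 * K + (- (1 - m) * (1 + 3 * m) / 12) * K') in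
  let D' := 0 * E + 1 * E' + (1/2 * K + (- (1 - m) / 2) * K') in
  N' * D - 3 * N * D' < 0.
Proof.
  intros hm hK hE E' K' N D N' D'.
  assert (e : N' * D - 3 * N * D' = (1 - m) * E * ((1 - m) * K - E) / (8 * m)).
  { unfold N', D', N, D, E', K'. field. lra. }
  rewrite e. apply Rdiv_neg_pos; [|lra].
  assert (0 < E) by nra.
  assert (0 < (1 - m) * E) by nra. nra.
Qed.

Definition Nd m := 1/3 * Ei m + (1 + m) / 3 * ((Ei m - Ki m) / (2 * m)) +
  ((3 * m - 1) / 6 * Ki m + (- (1 - m) * (1 + 3 * m) / 12) * ((Ei m / (1 - m) - Ki m) / (2 * m))).
Definition Dd m := 0 * Ei m + 1 * ((Ei m - Ki m) / (2 * m)) +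
  (1/2 * Ki m + (- (1 - m) / 2) * ((Ei m / (1 - m) - Ki m) / (2 * m))).
Definition Rd m := (Nd m * Df m ^ 3 - Nf m * (INR 3 * Dd m * Df m ^ Init.Nat.pred 3)) / (Df m ^ 3) ^ 2.

Lemma Rf_deriv m : 0 < m < 1 -> is_derive Rf m (Rd m).
Proof.
  intros hm. unfold Rf, Rd.
  apply (is_derive_div Nf (fun x => Df x ^ 3)).
  - unfold Nf, Nd.
    apply (der_lin (fun m => (1 + m) / 3) (fun m => - (1 - m) * (1 + 3 * m) / 12) Ei Ki).
    auto_derive; auto; field. auto_derive; auto; field.
    apply Ei_deriv; auto. apply Ki_deriv; auto.
  - apply (is_derive_pow Df 3 m). unfold Df, Dd.
    apply (der_lin (fun m => 1) (fun m => - (1 - m) / 2) Ei Ki).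
    auto_derive; auto. auto_derive; auto; field.
    apply Ei_deriv; auto. apply Ki_deriv; auto.
  - apply pow_nonzero. apply Rgt_not_eq, Df_pos; auto.
Qed.

Lemma Rd_neg m : 0 < m < 1 -> Rd m < 0.
Proof.
  intros hm. pose proof (Df_pos m hm) as hD.
  pose proof (sign_alg m (Ei m) (Ki m) hm (Ki_pos m ltac:(lra)) (EK_gt m hm)) as hs.
  simpl in hs. unfold Rd. fold (Nd m) in hs.
  replace (Nd m * Df m ^ 3 - Nf m * (INR 3 * Dd m * Df m ^ Init.Nat.pred 3))
    with (Df m ^ 2 * (Nd m * Df m - 3 * Nf m * Dd m))
    by (simpl; ring).
  apply Rdiv_neg_pos.
  - apply Rmult_pos_neg. apply pow_lt; auto. unfold Nd, Df, Nf, Dd. exact hs.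
  - apply pow_lt, pow_lt; auto.
Qed.

Lemma Rf_decr m1 m2 : 0 < m1 -> m1 < m2 -> m2 < 1 -> Rf m2 < Rf m1.
Proof.
  intros h1 h2 h3.
  destruct (MVT_cor2 Rf Rd m1 m2 h2) as [c [hc1 hc2]].
  - intros c hc. apply is_derive_Reals. apply Rf_deriv. lra.
  - pose proof (Rd_neg c ltac:(lra)). nra.
Qed.

Definition g1 (b t : R) := (1 - sin b ^ 2 * sin t ^ 2) ^ 2 / sqrt (2 - sin b ^ 2 - sin b ^ 2 * sin t ^ 2).
Definition g2 (b t : R) := (1 - sin b ^ 2 * sin t ^ 2) / sqrt (2 - sin b ^ 2 - sin b ^ 2 * sin t ^ 2).
Definition I1f (b : R) : R := RInt (g1 b) (-(PI/2)) (PI/2).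
Definition I2f (b : R) : R := RInt (g2 b) (-(PI/2)) (PI/2).
Definition alpha (b : R) := 2 - sin b ^ 2.
Definition mb (b : R) := sin b ^ 2 / (2 - sin b ^ 2).

Lemma sinb_facts b : 0 < b < PI/2 -> 0 < sin b ^ 2 < 1.
Proof.
  intros hb. pose proof PI_RGT_0.
  assert (0 < sin b) by (apply sin_gt_0; lra).
  assert (sin b < 1) by (rewrite <- sin_PI2; apply sin_increasing_1; lra).
  split; nra.
Qed.

Lemma mb_range b : 0 < b < PI/2 -> 0 < mb b < 1.
Proof.
  intros hb. pose proof (sinb_facts b hb). unfold mb. split.
  apply Rdiv_lt_0_compat; lra.
  apply (Rmult_lt_reg_r (2 - sin b ^ 2)); [lra|]. unfold Rdiv. rewrite Rmult_assoc, Rinv_l; lra.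
Qed.

Lemma key_sqrt b t : 0 < b < PI/2 ->
  sqrt (2 - sin b ^ 2 - sin b ^ 2 * sin t ^ 2) = sqrt (alpha b) * sqrt (W (mb b) t).
Proof.
  intros hb. pose proof (sinb_facts b hb). pose proof (mb_range b hb).
  pose proof (W_pos (mb b) t ltac:(lra)).
  rewrite <- sqrt_mult by (unfold alpha; lra). f_equal.
  unfold alpha, W, mb. field. lra.
Qed.

Lemma num_eq b t : 0 < b < PI/2 ->
  1 - sin b ^ 2 * sin t ^ 2 =
  sqrt (alpha b) * sqrt (alpha b) * (sqrt (W (mb b) t) * sqrt (W (mb b) t))
  - sqrt (alpha b) * sqrt (alpha b) * (1 - mb b) / 2.
Proof.
  intros hb. pose proof (sinb_facts b hb). pose proof (mb_range b hb).
  pose proof (W_pos (mb b) t ltac:(lra)).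
  rewrite !sqrt_sqrt by (unfold alpha; lra).
  unfold alpha, W, mb. field. lra.
Qed.

Lemma I2_eq b : 0 < b < PI/2 -> I2f b = sqrt (alpha b) * Df (mb b).
Proof.
  intros hb. pose proof (sinb_facts b hb). pose proof (mb_range b hb) as hm.
  set (a := sqrt (alpha b)) in *. set (m := mb b) in *.
  unfold I2f.
  rewrite (RInt_ext _ (fun t => a * hE m t + (- a * (1 - m) / 2) * hK m t + 0 * hK m t)).
  - rewrite RInt_lin3 by (apply ex_RInt_h; auto; lra). unfold Df.
    change (RInt (hE m) (-(PI/2)) (PI/2)) with (Ei m).
    change (RInt (hK m) (-(PI/2)) (PI/2)) with (Ki m). field.
  - intros t _. unfold g2. rewrite key_sqrt, num_eq by auto. fold a m.
    unfold hE, hK.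
    assert (0 < a) by (apply sqrt_lt_R0; unfold alpha; lra).
    assert (0 < sqrt (W m t)) by (apply sqrt_lt_R0, W_pos; lra).
    toR. field. lra.
Qed.

Lemma I1_eq b : 0 < b < PI/2 -> I1f b = sqrt (alpha b) * sqrt (alpha b) * sqrt (alpha b) * Nf (mb b).
Proof.
  intros hb. pose proof (sinb_facts b hb). pose proof (mb_range b hb) as hm.
  set (a := sqrt (alpha b)) in *. set (m := mb b) in *.
  unfold I1f.
  rewrite (RInt_ext _ (fun t => (a*a*a) * hE3 m t + (- (a*a*a) * (1 - m)) * hE m t
      + ((a*a*a) * (1 - m) ^ 2 / 4) * hK m t)).
  - rewrite RInt_lin3 by (apply ex_RInt_h; auto 6; lra).
    pose proof (E3_id m hm) as h3. unfold Nf.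
    change (RInt (hE m) (-(PI/2)) (PI/2)) with (Ei m).
    change (RInt (hK m) (-(PI/2)) (PI/2)) with (Ki m).
    change (RInt (hE3 m) (-(PI/2)) (PI/2)) with (E3i m).
    assert (G : forall e3 ee kk : R, 3 * e3 + (2 * m - 4) * ee + (1 - m) * kk = 0 ->
      a * a * a * e3 + - (a * a * a) * (1 - m) * ee + a * a * a * (1 - m) ^ 2 / 4 * kk =
      a * a * a * ((1 + m) / 3 * ee + - (1 - m) * (1 + 3 * m) / 12 * kk)).
    { intros x y z hx. replace x with (- ((2 * m - 4) * y + (1 - m) * z) / 3) by lra. field. }
    apply G. exact h3.
  - intros t _. unfold g1. rewrite key_sqrt, num_eq by auto. fold a m.
    unfold hE, hK, hE3.
    assert (0 < a) by (apply sqrt_lt_R0; unfold alpha; lra).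
    assert (0 < W m t) by (apply W_pos; lra).
    assert (hr := sqrt_sqrt (W m t) ltac:(lra)).
    assert (0 < sqrt (W m t)) by (apply sqrt_lt_R0, W_pos; lra).
    set (r := sqrt (W m t)) in *. rewrite <- hr.
    toR. field. lra.
Qed.

Lemma ratio_eq b : 0 < b < PI/2 -> I1f b / I2f b ^ 3 = Rf (mb b).
Proof.
  intros hb. rewrite I1_eq, I2_eq by auto. unfold Rf.
  pose proof (sinb_facts b hb).
  assert (0 < sqrt (alpha b)) by (apply sqrt_lt_R0; unfold alpha; lra).
  pose proof (Df_pos (mb b) (mb_range b hb)).
  field. lra.
Qed.

Lemma g_cont b x : 0 < b < PI/2 -> continuous (g1 b) x /\ continuous (g2 b) x.
Proof.
  intros hb. pose proof (sinb_facts b hb). pose proof (sin2_bounds x).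
  assert (hp : 0 < 2 - sin b ^ 2 - sin b ^ 2 * sin x ^ 2) by nra.
  split; [apply (ex_derive_continuous (V:=R_NormedModule) (g1 b))
         |apply (ex_derive_continuous (V:=R_NormedModule) (g2 b))];
  unfold g1, g2; auto_derive;
  (replace (2 + - (sin b * (sin b * 1)) + - (sin b * (sin b * 1) * (sin x * (sin x * 1))))
     with (2 - sin b ^ 2 - sin b ^ 2 * sin x ^ 2) by ring);
  repeat split; auto; try lra; apply Rgt_not_eq, sqrt_lt_R0; lra.
Qed.

Lemma g_bound b x : 0 < b < PI/2 ->
  Rabs (g1 b x) <= / sqrt (2 - 2 * sin b ^ 2) /\ Rabs (g2 b x) <= / sqrt (2 - 2 * sin b ^ 2).
Proof.
  intros hb. pose proof (sinb_facts b hb). pose proof (sin2_bounds x).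
  assert (hn : 0 <= 1 - sin b ^ 2 * sin x ^ 2 <= 1) by nra.
  assert (hd : 0 < 2 - 2 * sin b ^ 2 <= 2 - sin b ^ 2 - sin b ^ 2 * sin x ^ 2) by nra.
  assert (hs1 : 0 < sqrt (2 - 2 * sin b ^ 2)) by (apply sqrt_lt_R0; lra).
  assert (hs2 : sqrt (2 - 2 * sin b ^ 2) <= sqrt (2 - sin b ^ 2 - sin b ^ 2 * sin x ^ 2))
    by (apply sqrt_le_1_alt; lra).
  assert (key : forall n, 0 <= n <= 1 ->
     Rabs (n / sqrt (2 - sin b ^ 2 - sin b ^ 2 * sin x ^ 2)) <= / sqrt (2 - 2 * sin b ^ 2)).
  { intros n hn'. rewrite Rabs_pos_eq.
    - unfold Rdiv. apply Rle_trans with (1 * / sqrt (2 - sin b ^ 2 - sin b ^ 2 * sin x ^ 2)).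
      apply Rmult_le_compat_r. left; apply Rinv_0_lt_compat; lra. lra.
      rewrite Rmult_1_l. apply Rinv_le_contravar; lra.
    - apply Rdiv_le_0_compat; lra. }
  split; apply key; [|lra]. split; nra.
Qed.

Lemma f_ident b phi : 0 < b < PI/2 -> -b < phi < b ->
  f1 b phi = dtheta (sin b) phi * g1 b (theta (sin b) phi) /\
  f2 b phi = dtheta (sin b) phi * g2 b (theta (sin b) phi).
Proof.
  intros hb hphi. pose proof PI_RGT_0.
  assert (hk : 0 < sin b) by (apply sin_gt_0; lra).
  pose proof (sin_abs_lt b phi hb hphi) as hs. apply Rabs_def2 in hs.
  assert (hst : sin (theta (sin b) phi) = sin phi / sin b).
  { unfold theta. apply sin_asin. split.
    - apply (Rmult_le_reg_r (sin b)); auto. unfold Rdiv. rewrite Rmult_assoc, Rinv_l; lra.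
    - apply (Rmult_le_reg_r (sin b)); auto. unfold Rdiv. rewrite Rmult_assoc, Rinv_l; lra. }
  unfold g1, g2, dtheta, f1, f2. rewrite hst.
  set (k := sin b) in *. set (s := sin phi) in *.
  assert (e1 : k ^ 2 * (s / k) ^ 2 = s ^ 2) by (field; lra).
  rewrite e1.
  assert (hc2 : cos phi ^ 2 = 1 - s ^ 2).
  { unfold s. pose proof (sin2_cos2 phi). unfold Rsqr in H0. lra. }
  assert (hcb : cos b ^ 2 = 1 - k ^ 2).
  { unfold k. pose proof (sin2_cos2 b). unfold Rsqr in H0. lra. }
  assert (hk1 : k < 1) by (unfold k; rewrite <- sin_PI2; apply sin_increasing_1; lra).
  assert (hA : 0 < k ^ 2 - s ^ 2) by nra.
  assert (hB : 0 < 2 - k ^ 2 - s ^ 2) by nra.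
  assert (e2 : cos phi ^ 4 - cos b ^ 4 = (k ^ 2 - s ^ 2) * (2 - k ^ 2 - s ^ 2)).
  { replace (cos phi ^ 4) with ((cos phi ^ 2) ^ 2) by ring.
    replace (cos b ^ 4) with ((cos b ^ 2) ^ 2) by ring. rewrite hc2, hcb. ring. }
  rewrite e2, sqrt_mult by lra.
  assert (0 < sqrt (k ^ 2 - s ^ 2)) by (apply sqrt_lt_R0; lra).
  assert (0 < sqrt (2 - k ^ 2 - s ^ 2)) by (apply sqrt_lt_R0; lra).
  replace (cos phi ^ 5) with (cos phi * (cos phi ^ 2) ^ 2) by ring.
  replace (cos phi ^ 3) with (cos phi * cos phi ^ 2) by ring.
  rewrite hc2. split; field; lra.
Qed.

Theorem proposition13 :
  exists I1 I2 : R -> R,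
    (forall b, 0 < b -> b < PI / 2 ->
       improper_integral (f1 b) (- b) b (I1 b) /\
       improper_integral (f2 b) (- b) b (I2 b)) /\
    (forall b1 b2, 0 < b1 -> b1 < b2 -> b2 < PI / 2 ->
       I1 b2 / (I2 b2) ^ 3 < I1 b1 / (I2 b1) ^ 3).
Proof.
  exists I1f, I2f. split.
  - intros b h1 h2. assert (hb : 0 < b < PI/2) by lra. split.
    + apply (improper_sub b (g1 b) (f1 b) (/ sqrt (2 - 2 * sin b ^ 2))); auto.
      * intros x _. apply g_cont; auto.
      * intros x _. apply g_bound; auto.
      * intros phi hphi. apply f_ident; auto.
    + apply (improper_sub b (g2 b) (f2 b) (/ sqrt (2 - 2 * sin b ^ 2))); auto.
      * intros x _. apply g_cont; auto.
      * intros x _. apply g_bound; auto.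
      * intros phi hphi. apply f_ident; auto.
  - intros b1 b2 h1 h2 h3.
    rewrite !ratio_eq by lra.
    pose proof (mb_range b1 ltac:(lra)). pose proof (mb_range b2 ltac:(lra)).
    apply Rf_decr; try lra.
    pose proof PI_RGT_0.
    assert (0 < sin b1) by (apply sin_gt_0; lra).
    assert (sin b1 < sin b2) by (apply sin_increasing_1; lra).
    pose proof (sinb_facts b2 ltac:(lra)).
    assert (hu : sin b1 ^ 2 < sin b2 ^ 2) by nra.
    unfold mb. apply (Rmult_lt_reg_r ((2 - sin b1 ^ 2) * (2 - sin b2 ^ 2))); [nra|].
    field_simplify; try lra.
Qed.
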